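(* Let $\mathbf D$ be a Condorcet super-domain, let $V$ be a finite set of odd cardinality, let $(T_v)_{v\in V}$ be a family of tilings with all $T_v\in\mathbf D$, and let $T=sm((T_v)_{v\in V})$. Then $\mathbf D\cup\{T\}$ is a Condorcet super-domain.
   Context: Fix an integer $n\ge 3$ and write $[n]=\{1,\dots,n\}$. Let $\Lambda$ be the set of 3-element subsets of $[n]$; a triple $\{i,j,k\}$ with $i<j<k$ is written $ijk$. For a 4-element subset $F=\{i<j<k<l\}$ of $[n]$, the stick of $F$ is the sequence $(ijk,\ ijl,\ ikl,\ jkl)$. A tiling (the inversion set of a rhombus tiling of the zonogon $Z(n;2)$) is a subset $T\subseteq\Lambda$ such that for every 4-element $F\subseteq[n]$, $T\cap\mathrm{stick}(F)$ is an initial segment or a final segment of the stick (empty set and whole stick allowed). For a finite set $V$ of odd cardinality and tilings $(T_v)_{v\in V}$, $sm((T_v)_{v\in V})$ is the set of triples lying in $T_v$ for more than $|V|/2$ indices $v$. A set $\mathbf D$ of tilings is a Condorcet super-domain if for every finite $V$ of odd cardinality and every family $(T_v)_{v\in V}$ with all $T_v\in\mathbf D$, $sm((T_v)_{v\in V})$ is a tiling. *)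

(* Defs.v *)
From mathcomp Require Import all_boot.
Set Implicit Arguments. Unset Strict Implicit. Unset Printing Implicit Defensive.

(* Triples of [n] are 3-element subsets of 'I_n (elements 0..n-1 model 1..n). *)
Definition triples (n : nat) : {set {set 'I_n}} := [set t : {set 'I_n} | #|t| == 3].

Definition stick (n : nat) (i j k l : 'I_n) : seq {set 'I_n} :=
  [:: [set i; j; k]; [set i; j; l]; [set i; k; l]; [set j; k; l]].

Definition init_or_final (n : nat) (T : {set {set 'I_n}}) (s : seq {set 'I_n}) : Prop :=
  exists m : nat, m <= size s /\
    ([seq x <- s | x \in T] = take m s \/ [seq x <- s | x \in T] = drop m s).

Definition tiling (n : nat) (T : {set {set 'I_n}}) : Prop :=
  T \subset triples n /\
  forall i j k l : 'I_n, i < j -> j < k -> k < l -> init_or_final T (stick i j k l).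

Definition sm (n : nat) (V : finType) (Tv : V -> {set {set 'I_n}}) : {set {set 'I_n}} :=
  [set t : {set 'I_n} | #|V| < 2 * #|[set v : V | t \in Tv v]| ].

Definition condorcet_super_domain (n : nat) (D : {set {set {set 'I_n}}}) : Prop :=
  (forall T, T \in D -> tiling T) /\
  forall (V : finType) (Tv : V -> {set {set 'I_n}}),
    odd #|V| -> (forall v, Tv v \in D) -> tiling (sm Tv).

(* Main.v *)
Require Import Defs.
From mathcomp Require Import all_boot zify.
Set Implicit Arguments. Unset Strict Implicit. Unset Printing Implicit Defensive.

Lemma arith1 N c d : odd N -> ~~ (N < 2 * c) -> c + d = N -> N < 2 * d.
Proof.
move=> Ho H E.
have : 2 * c != N by apply/eqP => E'; move: Ho; rewrite -E' oddM.
lia.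
Qed.

Lemma half n (U : finType) (Tu : U -> {set {set 'I_n}}) t c :
  odd #|U| -> (t \in sm Tu) = c -> #|U| < 2 * #|[set u | (t \in Tu u) == c]|.
Proof.
move=> Ho; case: c.
  rewrite inE => H.
  suff -> : [set u | (t \in Tu u) == true] = [set u | t \in Tu u] by [].
  by apply: eq_finset => u; rewrite eqb_id.
rewrite inE => /negbT H.
have -> : [set u | (t \in Tu u) == false] = ~: [set u | t \in Tu u].
  by apply/setP => u; rewrite !inE eqbF_neg.
move: H; set c := #|_| => H. have Ec : c + #|~: [set u | t \in Tu u]| = #|U| by rewrite /c; exact: cardsC. move: Ho H Ec; generalize #|U| c #|~: [set u | t \in Tu u]|. exact: arith1.
Qed.

Lemma pair_wit n (U : finType) (Tu : U -> {set {set 'I_n}}) a b ca cb :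
 odd #|U| -> (a \in sm Tu) = ca -> (b \in sm Tu) = cb ->
 exists u, (a \in Tu u) = ca /\ (b \in Tu u) = cb.
Proof.
move=> Ho Ha Hb.
have HA := half Ho Ha; have HB := half Ho Hb.
set A := [set u | _ == ca] in HA; set B := [set u | _ == cb] in HB.
have : 0 < #|A :&: B|.
  move: (cardsUI A B) (max_card (A :|: B)) HA HB.
  move: #|A :|: B| #|A :&: B| #|A| #|B| #|U| => *; lia.
rewrite card_gt0 => /set0Pn [u]; rewrite !inE => /andP [/eqP h1 /eqP h2].
by exists u.
Qed.

Definition bad n (S : {set {set 'I_n}}) (x y z : {set 'I_n}) : bool :=
  ((x \in S) == (z \in S)) && ((x \in S) != (y \in S)).

Lemma iof_bad n (S : {set {set 'I_n}}) s1 s2 s3 s4 :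
  s1 != s2 -> s1 != s3 -> s1 != s4 -> s2 != s3 -> s2 != s4 -> s3 != s4 ->
  init_or_final S [:: s1; s2; s3; s4] <->
  [&& ~~ bad S s1 s2 s3, ~~ bad S s1 s2 s4, ~~ bad S s1 s3 s4 & ~~ bad S s2 s3 s4].
Proof.
move=> h12 h13 h14 h23 h24 h34; rewrite /init_or_final /bad /=.
split.
  move=> [m [Hm H]]; move: H.
  case: (s1 \in S) (s2 \in S) (s3 \in S) (s4 \in S) => [] [] [] [] //=;
  case: m Hm => [|[|[|[|[|m]]]]] //= _ [] H; try (by []);
  case: H => *; subst; by rewrite ?eqxx in h12 h13 h14 h23 h24 h34.
case: (s1 \in S) (s2 \in S) (s3 \in S) (s4 \in S) => [] [] [] [] //= _;
 first [ exists 0; split=> //; by [left|right]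
       | exists 1; split=> //; by [left|right]
       | exists 2; split=> //; by [left|right]
       | exists 3; split=> //; by [left|right]
       | exists 4; split=> //; by [left|right] ].
Qed.

Lemma wit n (U : finType) (Tu : U -> {set {set 'I_n}}) x y z b1 b2 b3 :
  odd #|U| -> (forall u, ~~ bad (Tu u) x y z) ->
  ~~ ((b1 == b3) && (b1 != b2)) ->
  (x \in sm Tu) = b1 -> (y \in sm Tu) = b2 -> (z \in sm Tu) = b3 ->
  exists u, [/\ (x \in Tu u) = b1, (y \in Tu u) = b2 & (z \in Tu u) = b3].
Proof.
move=> Ho Hg Hp Hx Hy Hz.
case E13: (b1 == b3).
  have [u [h1 h2]] := pair_wit Ho Hx Hz; exists u.
  move: h1 h2 (Hg u) Hp E13; rewrite /bad; clear Hx Hy Hz.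
  by case: (x \in Tu u) (y \in Tu u) (z \in Tu u) b1 b2 b3 => [] [] [] [] [] [].
case E12: (b1 == b2).
  have [u [h1 h2]] := pair_wit Ho Hy Hz; exists u.
  move: h1 h2 (Hg u) Hp E13 E12; rewrite /bad; clear Hx Hy Hz.
  by case: (x \in Tu u) (y \in Tu u) (z \in Tu u) b1 b2 b3 => [] [] [] [] [] [].
have [u [h1 h2]] := pair_wit Ho Hx Hy; exists u.
move: h1 h2 (Hg u) Hp E13 E12; rewrite /bad; clear Hx Hy Hz.
by case: (x \in Tu u) (y \in Tu u) (z \in Tu u) b1 b2 b3 => [] [] [] [] [] [].
Qed.

Definition f3 n (A B C : {set {set 'I_n}}) (i : 'I_3) : {set {set 'I_n}} :=
  nth set0 [:: A; B; C] i.

Lemma sm3 n (A B C : {set {set 'I_n}}) t :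
  (t \in sm (f3 A B C)) =
  [|| (t \in A) && (t \in B), (t \in A) && (t \in C) | (t \in B) && (t \in C)].
Proof.
rewrite inE card_ord -sum1_card big_mkcond /= !big_ord_recr big_ord0 /=.
rewrite !inE /f3 /=.
by case: (t \in A) (t \in B) (t \in C) => [] [] [].
Qed.

Lemma noBad n (D : {set {set {set 'I_n}}}) (V : finType) (Tv : V -> {set {set 'I_n}}) x y z :
  odd #|V| -> (forall v, Tv v \in D) ->
  (forall R, R \in D -> ~~ bad R x y z) ->
  ~~ bad (sm Tv) x y z ->
  (forall A B C, A \in D -> B \in D -> C \in D -> ~~ bad (sm (f3 A B C)) x y z) ->
  forall (W : finType) (Tw : W -> {set {set 'I_n}}), odd #|W| ->
  (forall w, Tw w \in D :|: [set sm Tv]) ->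
  ~~ bad (sm Tw) x y z.
Proof.
move=> HoV HTv HG HGT H3 W Tw HoW HTw.
have HGw : forall w, ~~ bad (Tw w) x y z.
  by move=> w; move: (HTw w); rewrite inE => /orP [/HG // | /set1P ->].
have lift : forall w b1 b2 b3, ~~ ((b1 == b3) && (b1 != b2)) ->
    [/\ (x \in Tw w) = b1, (y \in Tw w) = b2 & (z \in Tw w) = b3] ->
    exists2 R, R \in D & [/\ (x \in R) = b1, (y \in R) = b2 & (z \in R) = b3].
  move=> w b1 b2 b3 Hp [h1 h2 h3]; move: (HTw w); rewrite inE => /orP [HR | /set1P E].
    by exists (Tw w).
  rewrite E in h1 h2 h3.
  have [v Hv] := wit HoV (fun v => HG _ (HTv v)) Hp h1 h2 h3.
  by exists (Tv v).
apply/negP => Hb.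
have [c hx] : exists c, (x \in sm Tw) = c by eexists.
have hy : (y \in sm Tw) = ~~ c.
  by move: Hb; rewrite /bad hx; case: (z \in sm Tw); case: (y \in sm Tw); destruct c.
have hz : (z \in sm Tw) = c.
  by move: Hb; rewrite /bad hx; case: (z \in sm Tw); case: (y \in sm Tw); destruct c.
have [w1 [a1 a2]] := pair_wit HoW hx hy.
have [w2 [a3 a4]] := pair_wit HoW hy hz.
have [w3 [a5 a6]] := pair_wit HoW hx hz.
have [A HA [A1 A2 A3]] : exists2 R, R \in D & [/\ (x \in R) = c, (y \in R) = ~~ c & (z \in R) = ~~ c].
  apply: (lift w1); first by destruct c.
  split=> //; move: (HGw w1); rewrite /bad a1 a2.
  by destruct c; case: (z \in Tw w1).
have [B HB [B1 B2 B3]] : exists2 R, R \in D & [/\ (x \in R) = ~~ c, (y \in R) = ~~ c & (z \in R) = c].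
  apply: (lift w2); first by destruct c.
  split=> //; move: (HGw w2); rewrite /bad a3 a4.
  by destruct c; case: (x \in Tw w2).
have [C HC [C1 C2 C3]] : exists2 R, R \in D & [/\ (x \in R) = c, (y \in R) = c & (z \in R) = c].
  apply: (lift w3); first by destruct c.
  split=> //; move: (HGw w3); rewrite /bad a5 a6.
  by destruct c; case: (y \in Tw w3).
move: (H3 A B C HA HB HC); rewrite /bad !sm3 A1 A2 A3 B1 B2 B3 C1 C2 C3.
by destruct c.
Qed.

Lemma ordF n (a b : 'I_n) : a < b -> (a == b) = false /\ (b == a) = false.
Proof. by move=> h; rewrite -!val_eqE /=; split; apply/negbTE; [rewrite ltn_eqF | rewrite gtn_eqF]. Qed.

Lemma stick_iof n (S : {set {set 'I_n}}) (i j k l : 'I_n) :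
  i < j -> j < k -> k < l ->
  init_or_final S (stick i j k l) <->
  [&& ~~ bad S [set i; j; k] [set i; j; l] [set i; k; l],
      ~~ bad S [set i; j; k] [set i; j; l] [set j; k; l],
      ~~ bad S [set i; j; k] [set i; k; l] [set j; k; l] &
      ~~ bad S [set i; j; l] [set i; k; l] [set j; k; l]].
Proof.
move=> hij hjk hkl.
have hik : i < k by apply: ltn_trans hjk.
have hjl : j < l by apply: ltn_trans hkl.
have hil : i < l by apply: ltn_trans hjl.
have [e1 e1'] := ordF hij; have [e2 e2'] := ordF hjk; have [e3 e3'] := ordF hkl.
have [e4 e4'] := ordF hik; have [e5 e5'] := ordF hjl; have [e6 e6'] := ordF hil.
apply: iof_bad.
- by apply/eqP => /setP /(_ l); rewrite !inE !eqxx e3' e5' e6' /= ?orbT.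
- by apply/eqP => /setP /(_ l); rewrite !inE !eqxx e3' e5' e6' /= ?orbT.
- by apply/eqP => /setP /(_ l); rewrite !inE !eqxx e3' e5' e6' /= ?orbT.
- by apply/eqP => /setP /(_ j); rewrite !inE !eqxx e1' e2 e5 /= ?orbT.
- by apply/eqP => /setP /(_ i); rewrite !inE !eqxx e1 e4 e6 /= ?orbT.
- by apply/eqP => /setP /(_ i); rewrite !inE !eqxx e1 e4 e6 /= ?orbT.
Qed.

Theorem mainTheorem7 (n : nat) (Hn : 3 <= n) (D : {set {set {set 'I_n}}})
  (HD : condorcet_super_domain D)
  (V : finType) (Hodd : odd #|V|) (Tv : V -> {set {set 'I_n}})
  (HTv : forall v, Tv v \in D) :
  condorcet_super_domain (D :|: [set sm Tv]).
Proof.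
case: HD => HD1 HD2.
have HT : tiling (sm Tv) by exact: HD2.
have Hmem : forall R, R \in D :|: [set sm Tv] -> tiling R.
  by move=> R; rewrite inE => /orP [/HD1 // | /set1P ->].
split=> // W Tw HoW HTw.
split.
  apply/subsetP => t; rewrite inE => Ht.
  have : 0 < #|[set w | t \in Tw w]| by move: Ht; case: #|[set w | t \in Tw w]|.
  rewrite card_gt0 => /set0Pn [w]; rewrite inE => Htw.
  by case: (Hmem _ (HTw w)) => /subsetP /(_ t Htw).
move=> i j k l hij hjk hkl.
have G : forall R, tiling R -> [&& ~~ bad R [set i; j; k] [set i; j; l] [set i; k; l],
      ~~ bad R [set i; j; k] [set i; j; l] [set j; k; l],
      ~~ bad R [set i; j; k] [set i; k; l] [set j; k; l] &
      ~~ bad R [set i; j; l] [set i; k; l] [set j; k; l]].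
  by move=> R [_ HR]; apply/(stick_iof _ hij hjk hkl); exact: HR.
have G3 : forall A B C, A \in D -> B \in D -> C \in D -> tiling (sm (f3 A B C)).
  move=> A B C HA HB HC; apply: HD2; first by rewrite card_ord.
  by case=> [[|[|[|?]]] ?].
apply/(stick_iof _ hij hjk hkl).
have GT := G _ HT.
have GD : forall R, R \in D -> _ := fun R HR => G _ (HD1 _ HR).
have GA : forall A B C, A \in D -> B \in D -> C \in D -> _ :=
  fun A B C HA HB HC => G _ (G3 A B C HA HB HC).
apply/and4P; split; apply: (noBad Hodd HTv _ _ _ HoW HTw).
all: try by move=> R /GD /and4P [].
all: try by case/and4P: GT.
all: by move=> A B C HA HB HC; case/and4P: (GA A B C HA HB HC).
Qed.
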